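(* Let $k\ge 2$ and $2\le r\le k$ be integers, let $T=3^{k-r+1}$ and $M=3^{r-1}$, and let $S=(\mathcal{P},\mathcal{B})$ be a Steiner triple system on $|\mathcal{P}|=3^k$ points whose $3$-rank is at most $3^k-r$. Fix a decomposition of $S$ of the form described in the context (groups $G_x$, $x\in AG(r-1,3)$, sub-systems $\mathcal{B}_x$ and transversal designs $\mathcal{B}_\ell$). Suppose that (i) for every point $x$ of $AG(r-1,3)$, the Steiner triple system $(G_x,\mathcal{B}_x)$ on $T$ points is resolvable, and (ii) for every line $\ell$ of $AG(r-1,3)$, the Latin square of order $T$ corresponding to the transversal design $\mathcal{B}_\ell$ has an orthogonal mate. Then $S$ is resolvable, i.e. $\mathcal{B}$ can be partitioned into $\frac{3^k-1}{2}$ parallel classes.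
   Context: A Steiner triple system $STS(v)$ is a pair $(\mathcal{P},\mathcal{B})$ with $|\mathcal{P}|=v$ and $\mathcal{B}$ a set of $3$-subsets (blocks) of $\mathcal{P}$ such that every $2$-subset of $\mathcal{P}$ lies in exactly one block. Its $3$-rank is the rank over $\mathbb{F}_3$ of its block–point incidence matrix. A parallel class is a subset of $\mathcal{B}$ whose blocks partition $\mathcal{P}$; $S$ is resolvable if $\mathcal{B}$ can be partitioned into parallel classes. A transversal design $TD[3;T]$ on three pairwise disjoint groups $H_1,H_2,H_3$ of size $T$ is a set of $T^2$ triples $\{a,b,c\}$ with $a\in H_1,b\in H_2,c\in H_3$ such that every pair of points from two distinct groups lies in exactly one triple; equivalently it is a Latin square of order $T$ (rows indexed by $H_1$, columns by $H_2$, symbols by $H_3$). Two Latin squares of order $n$ are orthogonal if superimposing them yields each ordered pair of symbols exactly once; an orthogonal mate of a Latin square is a Latin square orthogonal to it. Decomposition (from the cited structure theorem of Jungnickel et al. for non-full-3-rank STS, used here as the standing setup): if $S$ is an $STS(3^k)$ of $3$-rank at most $3^k-r$, then the point set $\mathcal{P}$ is partitioned into $M=3^{r-1}$ groups $G_x$ of size $T=3^{k-r+1}$, indexed by the points $x$ of the affine geometry $AG(r-1,3)$, and the block set splits as $\mathcal{B}=\bigcup_x \mathcal{B}_x\ \cup\ \bigcup_\ell \mathcal{B}_\ell$, where for each point $x$, $(G_x,\mathcal{B}_x)$ is an $STS(T)$, and for each line $\ell=\{x,y,z\}$ of $AG(r-1,3)$, $\mathcal{B}_\ell$ is a set of $T^2$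 blocks forming a transversal design $TD[3;T]$ on the three groups $G_x,G_y,G_z$. *)

(* Defs.v *)
From HB Require Import structures.
From mathcomp Require Import all_boot all_order all_algebra.
Set Implicit Arguments. Unset Strict Implicit. Unset Printing Implicit Defensive.
Import GRing.Theory.

Section Defs.
Variable P : finType.

Definition is_STS (Pts : {set P}) (Bl : {set {set P}}) : Prop :=
  (forall b, b \in Bl -> b \subset Pts /\ #|b| = 3) /\
  (forall u v, u \in Pts -> v \in Pts -> u != v ->
     #|[set b in Bl | (u \in b) && (v \in b)]| = 1).

Definition parallel_class (Pts : {set P}) (Bl C : {set {set P}}) : bool :=
  (C \subset Bl) && partition C Pts.

Definition resolution (Pts : {set P}) (Bl : {set {set P}})
    (Q : {set {set {set P}}}) : bool :=
  partition Q Bl && [forall C in Q, parallel_class Pts Bl C].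

Definition resolvable (Pts : {set P}) (Bl : {set {set P}}) : Prop :=
  exists Q, resolution Pts Bl Q.

Definition is_TD (T : nat) (G1 G2 G3 : {set P}) (Bl : {set {set P}}) : Prop :=
  (#|G1| = T /\ #|G2| = T /\ #|G3| = T) /\
  ([disjoint G1 & G2] && [disjoint G1 & G3] && [disjoint G2 & G3]) /\
      (forall b, b \in Bl ->
         [/\ b \subset G1 :|: G2 :|: G3, #|b :&: G1| = 1, #|b :&: G2| = 1
           & #|b :&: G3| = 1]) /\
      (forall (i j : 'I_3) u v, i != j ->
         u \in nth G1 [:: G1; G2; G3] i -> v \in nth G1 [:: G1; G2; G3] j ->
         #|[set b in Bl | (u \in b) && (v \in b)]| = 1).

(* The Latin square L of the TD Bl has rows G1, columns G2, symbols G3: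
   L(a,b) = c  iff  {a,b,c} is a block.  An orthogonal mate is a Latin square
   L' on rows G1, columns G2 (symbols taken in G3, a set of the right size)
   such that superimposing L and L' gives each ordered pair of symbols exactly
   once; since there are T^2 cells and T^2 ordered pairs this is injectivity of
   (a,b) |-> (L(a,b), L'(a,b)). *)
Definition has_orthogonal_mate (G1 G2 G3 : {set P}) (Bl : {set {set P}}) : Prop :=
  exists L' : P -> P -> P,
    [/\ (forall a b, a \in G1 -> b \in G2 -> L' a b \in G3),
        (forall a b b', a \in G1 -> b \in G2 -> b' \in G2 ->
            L' a b = L' a b' -> b = b'),
        (forall a a' b, a \in G1 -> a' \in G1 -> b \in G2 ->
            L' a b = L' a' b -> a = a') &
        (forall a a' b b' c, a \in G1 -> a' \in G1 -> b \in G2 -> b' \in G2 ->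
            [set a; b; c] \in Bl -> [set a'; b'; c] \in Bl ->
            L' a b = L' a' b' -> a = a' /\ b = b')].

Definition incmx (B : {set {set P}}) : 'M['F_3]_(#|B|, #|[set: P]|) :=
  \matrix_(i < #|B|, j < #|[set: P]|)
     (if enum_val j \in enum_val i then 1%R else 0%R).

Definition three_rank (B : {set {set P}}) : nat := \rank (incmx B).
End Defs.

Definition AG_line (n : nat) (l : {set 'rV['F_3]_n}) : bool :=
  [exists a : 'rV['F_3]_n, exists d : 'rV['F_3]_n,
     (d != 0)%R && (l == [set (a + t *: d)%R | t : 'F_3])].

(* Main.v *)
Require Import Defs.
From HB Require Import structures.
From mathcomp Require Import all_boot all_order all_algebra.
Set Implicit Arguments. Unset Strict Implicit. Unset Printing Implicit Defensive.
Import GRing.Theory.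


Lemma triv_eq (T : finType) (C : {set {set T}}) b b' p :
  trivIset C -> b \in C -> b' \in C -> p \in b -> p \in b' -> b = b'.
Proof.
move=> /trivIsetP tI bC b'C pb pb'; apply/eqP; apply: contraT => ne.
have := tI _ _ bC b'C ne; rewrite -setI_eq0 => /eqP E.
have H : p \in b :&: b' by rewrite inE pb pb'.
by rewrite E inE in H.
Qed.

Lemma part_ex (T : finType) (C : {set {set T}}) D p :
  partition C D -> p \in D -> exists2 b, b \in C & p \in b.
Proof.
move=> /cover_partition <- /bigcupP[b bC pb]; by exists b.
Qed.

Lemma part_of_unique (T : finType) (C : {set {set T}}) (D : {set T}) :
  (forall b, b \in C -> b != set0 /\ b \subset D) ->
  (forall p, p \in D -> exists2 b : {set T}, b \in C & p \in b) ->
  (forall p (b b' : {set T}), p \in b -> p \in b' -> b \in C -> b' \in C -> b = b') ->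
  partition C D.
Proof.
move=> H1 H2 H3; apply/and3P; split.
- rewrite eqEsubset; apply/andP; split.
    by apply/bigcupsP => b /H1 [].
  by apply/subsetP => p /H2 [b bC pb]; apply/bigcupP; exists b.
- apply/trivIsetP => b b' bC b'C ne; rewrite -setI_eq0; apply/eqP/setP => p.
  rewrite !inE; apply/negP => /andP[pb pb'].
  by move/eqP: ne; apply; apply: (H3 p).
- by apply/negP => /H1 [] /eqP.
Qed.

Lemma res_count (T : finType) (Pts : {set T}) Bl Q u :
  is_STS Pts Bl -> resolution Pts Bl Q -> u \in Pts ->
  #|Q| * 2 = #|Pts| - 1.
Proof.
move=> [Hb Hp] /andP[pQ /forall_inP pc] uP.
set Bu := [set b in Bl | u \in b].
have -> : #|Q| = #|Bu|.
  have inj : {in Q &, injective (fun C => pblock C u)}.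
    move=> C C' CQ C'Q /= E.
    have /andP[_ cC] := pc _ CQ.
    have /andP[_ cC'] := pc _ C'Q.
    have uc : u \in cover C by rewrite (cover_partition cC).
    have uc' : u \in cover C' by rewrite (cover_partition cC').
    have bC := pblock_mem uc. have bC' := pblock_mem uc'.
    rewrite E in bC.
    have /andP[_ /andP[tQ _]] := pQ.
    apply: (triv_eq tQ CQ C'Q (p := pblock C' u)) => //.
  rewrite -(card_in_imset inj); apply: eq_card => b; apply/imsetP/idP.
    move=> [C CQ ->]; have /andP[/subsetP sC cC] := pc _ CQ.
    have uc : u \in cover C by rewrite (cover_partition cC).
    by rewrite inE sC ?pblock_mem // mem_pblock.
  rewrite inE => /andP[bB ub].
  have [C CQ bC] := part_ex pQ bB.
  exists C => //; have /andP[_ /and3P[_ tC _]] := pc _ CQ.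
  by rewrite (def_pblock tC bC ub).
rewrite (cardsD1 u Pts) uP add1n subSS subn0.
have Hs : forall (A : {set {set T}}) (v : T),
    \sum_(b in A) (v \in b : nat) = #|[set b in A | v \in b]|.
  move=> A v; rewrite -sum1_card [RHS]big_mkcond [LHS]big_mkcond /=.
  by apply: eq_bigr => b _; rewrite inE; case: (b \in A); case: (v \in b).
have Hs' : forall (A : {set T}) (b : {set T}),
    \sum_(v in A) (v \in b : nat) = #|A :&: b|.
  move=> A b; rewrite -sum1_card [RHS]big_mkcond [LHS]big_mkcond /=.
  by apply: eq_bigr => v _; rewrite inE; case: (v \in A); case: (v \in b).
have E1 : #|Pts :\ u| = \sum_(v in Pts :\ u) \sum_(b in Bu) (v \in b : nat).
  rewrite -sum1_card; apply: eq_bigr => v; rewrite !inE => /andP[nv vP].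
  rewrite Hs -(Hp u v uP vP); last by rewrite eq_sym.
  by apply: eq_card => b; rewrite !inE andbA.
rewrite E1 exchange_big /= -sum_nat_const; apply: eq_bigr => b.
rewrite inE => /andP[bB ub]; rewrite Hs'.
have [sb cb] := Hb b bB.
have -> : (Pts :\ u) :&: b = b :\ u.
  apply/setP => v; rewrite !inE; case vb: (v \in b); last by rewrite !andbF.
  by rewrite (subsetP sb v vb) andbT.
by move: cb; rewrite (cardsD1 u b) ub add1n => -[->].
Qed.

Local Open Scope ring_scope.

Definition dir n (l : {set 'rV['F_3]_n}) : {set 'rV['F_3]_n} :=
  [set u - v | u in l, v in l].

Lemma line_param n (l : {set 'rV['F_3]_n}) : AG_line l ->
  exists d : 'rV['F_3]_n, dir l = [set t *: d | t : 'F_3] /\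
    forall x, x \in l -> l = [set x + t *: d | t : 'F_3].
Proof.
move=> /existsP[a /existsP[d /andP[_ /eqP ->]]]; exists d; split.
  apply/setP => w; apply/imset2P/imsetP.
    move=> [u v /imsetP[t _ ->] /imsetP[t' _ ->] ->]; exists (t - t') => //.
    by rewrite opprD addrACA subrr add0r scalerBl.
  move=> [t _ ->]; exists (a + t *: d) a; first (by apply/imsetP; exists t); last by rewrite addrC addKr.
  by apply/imsetP; exists 0; rewrite ?scale0r ?addr0.
move=> x /imsetP[s _ ->]; apply/setP => w; apply/imsetP/imsetP.
  move=> [t _ ->]; exists (t - s) => //.
  by rewrite -addrA -scalerDl [s + _]addrC subrK.
move=> [t _ ->]; exists (s + t) => //.
by rewrite scalerDl addrA.
Qed.

Lemma line_dir n (l : {set 'rV['F_3]_n}) x : AG_line l -> x \in l ->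
  l = [set x + w | w in dir l].
Proof.
move=> Hl xl; have [d [-> /(_ x xl) E]] := line_param Hl.
rewrite {1}E; apply/setP => w; apply/imsetP/imsetP.
  by move=> [t _ ->]; exists (t *: d) => //; apply/imsetP; exists t.
by move=> [w' /imsetP[t _ ->] ->]; exists t.
Qed.

Lemma line_shift n (l : {set 'rV['F_3]_n}) x : AG_line l ->
  AG_line [set x + w | w in dir l] /\ dir [set x + w | w in dir l] = dir l.
Proof.
move=> Hl; have Hl' := Hl.
move: Hl' => /existsP[a /existsP[d /andP[nd /eqP El]]].
have [d' [Ed _]] := line_param Hl.
have Ed0 : dir l = [set t *: d | t : 'F_3].
  rewrite El; apply/setP => w; apply/imset2P/imsetP.
    move=> [u v /imsetP[t _ ->] /imsetP[t' _ ->] ->]; exists (t - t') => //.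
    by rewrite opprD addrACA subrr add0r scalerBl.
  move=> [t _ ->]; exists (a + t *: d) a; first (by apply/imsetP; exists t); last by rewrite addrC addKr.
  by apply/imsetP; exists 0; rewrite ?scale0r ?addr0.
have E : [set x + w | w in dir l] = [set x + t *: d | t : 'F_3].
  rewrite Ed0; apply/setP => w; apply/imsetP/imsetP.
    by move=> [w' /imsetP[t _ ->] ->]; exists t.
  by move=> [t _ ->]; exists (t *: d) => //; apply/imsetP; exists t.
have L : AG_line [set x + w | w in dir l].
  apply/existsP; exists x; apply/existsP; exists d; rewrite nd /=; apply/eqP; exact: E.
split => //; rewrite E Ed0; apply/setP => w; apply/imset2P/imsetP.
  move=> [u v /imsetP[t _ ->] /imsetP[t' _ ->] ->]; exists (t - t') => //.
  by rewrite opprD addrACA subrr add0r scalerBl.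
move=> [t _ ->]; exists (x + t *: d) x; first (by apply/imsetP; exists t); last by rewrite addrC addKr.
by apply/imsetP; exists 0; rewrite ?scale0r ?addr0.
Qed.
Local Close Scope ring_scope.

Lemma card1_ex (T : finType) (A : {set T}) : #|A| = 1 -> exists b, b \in A.
Proof. by move=> h; apply/card_gt0P; rewrite h. Qed.

Lemma card1_uniq (T : finType) (A : {set T}) b b' :
  #|A| = 1 -> b \in A -> b' \in A -> b = b'.
Proof.
move=> /eqP/cards1P[c ->]; rewrite !inE => /eqP -> /eqP -> //.
Qed.

Lemma inj_surj (T1 T2 : finType) (f : T1 -> T2) (A : {set T1}) (B : {set T2}) :
  {in A &, injective f} -> (forall a, a \in A -> f a \in B) -> #|A| = #|B| ->
  forall s, s \in B -> exists2 a, a \in A & f a = s.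
Proof.
move=> inj fAB cAB s sB.
have E : f @: A = B.
  apply/eqP; rewrite eqEcard (card_in_imset inj) cAB leqnn andbT.
  by apply/subsetP => y /imsetP[a aA ->]; apply: fAB.
by rewrite -E in sB; case/imsetP: sB => a aA ->; exists a.
Qed.

Lemma td_blk (P : finType) T (G1 G2 G3 : {set P}) Bl b :
  is_TD T G1 G2 G3 Bl -> b \in Bl ->
  exists a c e, [/\ b :&: G1 = [set a], b :&: G2 = [set c],
                    b :&: G3 = [set e] & b = [set a; c; e]].
Proof.
move=> [_ [_ [Hb _]]] bB; have [sb c1 c2 c3] := Hb b bB.
move/eqP/cards1P: c1 => [a Ea]; move/eqP/cards1P: c2 => [c Ec].
move/eqP/cards1P: c3 => [e Ee]; exists a, c, e; split => //.
apply/setP => q; rewrite !inE; apply/idP/idP.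
  move=> qb; have := subsetP sb q qb; rewrite !inE => /orP[/orP[h|h]|h].
  - have H : q \in b :&: G1 by rewrite inE qb h.
    by move: H; rewrite Ea inE => ->.
  - have H : q \in b :&: G2 by rewrite inE qb h.
    by move: H; rewrite Ec inE => ->; rewrite orbT.
  - have H : q \in b :&: G3 by rewrite inE qb h.
    by move: H; rewrite Ee inE => ->; rewrite !orbT.
move=> /orP[/orP[]|] /eqP ->.
- have H : a \in b :&: G1 by rewrite Ea inE.
    by move: H; rewrite inE => /andP[].
- have H : c \in b :&: G2 by rewrite Ec inE.
    by move: H; rewrite inE => /andP[].
- have H : e \in b :&: G3 by rewrite Ee inE.
    by move: H; rewrite inE => /andP[].
Qed.

Definition mate_prop (P : finType) (G1 G2 G3 : {set P}) (Bl : {set {set P}}) (L' : P -> P -> P) : Prop :=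
    [/\ (forall a b, a \in G1 -> b \in G2 -> L' a b \in G3),
        (forall a b b', a \in G1 -> b \in G2 -> b' \in G2 ->
            L' a b = L' a b' -> b = b'),
        (forall a a' b, a \in G1 -> a' \in G1 -> b \in G2 ->
            L' a b = L' a' b -> a = a') &
        (forall a a' b b' c, a \in G1 -> a' \in G1 -> b \in G2 -> b' \in G2 ->
            [set a; b; c] \in Bl -> [set a'; b'; c] \in Bl ->
            L' a b = L' a' b' -> a = a' /\ b = b')].

Unset Implicit Arguments. Set Strict Implicit.
Theorem theorem3p7 (k r : nat) (P : finType) (B : {set {set P}})
  (grp : P -> 'rV['F_3]_(r.-1))
  (Bx : 'rV['F_3]_(r.-1) -> {set {set P}})
  (BL : {set 'rV['F_3]_(r.-1)} -> {set {set P}}) :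
  2 <= k -> 2 <= r -> r <= k ->
  #|[set: P]| = 3 ^ k ->
  is_STS [set: P] B ->
  three_rank B <= 3 ^ k - r ->
  (forall x, #|[set p | grp p == x]| = 3 ^ (k - r + 1)) ->
  (forall x, is_STS [set p | grp p == x] (Bx x)) ->
  (forall l x y z, AG_line l -> l = [set x; y; z] ->
     x != y -> x != z -> y != z ->
     is_TD (3 ^ (k - r + 1)) [set p | grp p == x] [set p | grp p == y]
           [set p | grp p == z] (BL l)) ->
  B = (\bigcup_x Bx x) :|: (\bigcup_(l | AG_line l) BL l) ->
  (forall x, resolvable [set p | grp p == x] (Bx x)) ->
  (forall l, AG_line l -> exists x y z,
     [/\ l = [set x; y; z], x != y, x != z, y != z &
         has_orthogonal_mate [set p | grp p == x] [set p | grp p == y]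
           [set p | grp p == z] (BL l)]) ->
  exists Q, resolution [set: P] B Q /\ #|Q| = (3 ^ k - 1) %/ 2.
Proof.
move=> k2 r2 rk cardP HS _ HG0 HBx0 HTD0 HB Hres0 Hmate0.
set T := 3 ^ (k - r + 1) in HG0 HTD0.
pose V := 'rV['F_3]_(r.-1).
pose G (x : V) := [set p | grp p == x].
have HG : forall x, #|G x| = T := HG0.
have HBx : forall x, is_STS (G x) (Bx x) := HBx0.
have HTD : forall l x y z, AG_line l -> l = [set x; y; z] ->
     x != y -> x != z -> y != z -> is_TD T (G x) (G y) (G z) (BL l) := HTD0.
have Hres : forall x, resolvable (G x) (Bx x) := Hres0.
have inG : forall p x, (p \in G x) = (grp p == x) by move=> p x; rewrite inE.
have [p0 _] : exists p0 : P, p0 \in [set: P].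
  by apply/card_gt0P; rewrite cardP expn_gt0.
have [Qf HQf] := fin_all_exists Hres.
have : forall l : {set V}, exists m : V * V * V * (P -> P -> P),
   AG_line l -> [/\ l = [set m.1.1.1; m.1.1.2; m.1.2], m.1.1.1 != m.1.1.2,
                   m.1.1.1 != m.1.2, m.1.1.2 != m.1.2 &
       mate_prop (G m.1.1.1) (G m.1.1.2) (G m.1.2) (BL l) m.2].
  move=> l; case Ll: (AG_line l); last by exists (0%R, 0%R, 0%R, fun a _ => a).
  have [x [y [z [E xy xz yz [L' HL']]]]] := Hmate0 l Ll.
  by exists (x, y, z, L').
move=> /fin_all_exists [Mf HMf].
pose mx l := (Mf l).1.1.1. pose my l := (Mf l).1.1.2. pose mz l := (Mf l).1.2.
pose mL l := (Mf l).2.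
have Hm : forall l, AG_line l -> [/\ l = [set mx l; my l; mz l], mx l != my l,
    mx l != mz l, my l != mz l & mate_prop (G (mx l)) (G (my l)) (G (mz l)) (BL l) (mL l)].
  by move=> l Ll; apply: HMf.
have Htd : forall l, AG_line l -> is_TD T (G (mx l)) (G (my l)) (G (mz l)) (BL l).
  by move=> l Ll; have [E ? ? ? _] := Hm l Ll; apply: HTD.
have Hlm : forall l, AG_line l -> [/\ mx l \in l, my l \in l & mz l \in l].
  move=> l Ll; have [El _ _ _ _] := Hm l Ll.
  suff : [/\ mx l \in [set mx l; my l; mz l], my l \in [set mx l; my l; mz l] & mz l \in [set mx l; my l; mz l]] by rewrite -El.
  by rewrite !inE !eqxx ?orbT.
pose pt (b A : {set P}) := odflt p0 [pick q in b :&: A].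
have ptE : forall b A a, b :&: A = [set a] -> pt b A = a.
  move=> b A a E; rewrite /pt; case: pickP => [q | /(_ a)]; rewrite E inE.
    by move=> /eqP.
  by rewrite eqxx.
pose key (b : {set P}) : (nat + ({set V} * nat))%type :=
  if [pick x | b \in Bx x] is Some x then inl (index (pblock (Qf x) b) (enum (Qf x)))
  else if [pick l | AG_line l && (b \in BL l)] is Some l then
    inr (dir l, index (mL l (pt b (G (mx l))) (pt b (G (my l)))) (enum (G (mz l))))
  else inl 0.

have Hgb : forall x b, b \in Bx x -> b \subset G x /\ #|b| = 3.
  by move=> x b h; apply: (proj1 (HBx x)).
have setI1m : forall (b A : {set P}) a, b :&: A = [set a] -> a \in b /\ a \in A.
  move=> b A a E; have : a \in b :&: A by rewrite E set11.
  by rewrite inE => /andP[].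
have setI1u : forall (b A : {set P}) a u, b :&: A = [set a] -> u \in b -> u \in A -> u = a.
  move=> b A a u E ub uA; have : u \in b :&: A by rewrite inE ub uA.
  by rewrite E inE => /eqP.
have Hdec : forall l b, AG_line l -> b \in BL l -> exists a c e,
   [/\ a \in G (mx l), c \in G (my l), e \in G (mz l) & b = [set a; c; e]] /\
   [/\ pt b (G (mx l)) = a, pt b (G (my l)) = c &
       forall u, u \in b -> [/\ u \in G (mx l) -> u = a, u \in G (my l) -> u = c
                               & u \in G (mz l) -> u = e]].
  move=> l b Ll bl; have [a [c [e [Ea Ec Ee Eb]]]] := td_blk (Htd l Ll) bl.
  exists a, c, e; split; first split => //.
  - by case: (setI1m _ _ _ Ea).
  - by case: (setI1m _ _ _ Ec).
  - by case: (setI1m _ _ _ Ee).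
  split; [exact: ptE | exact: ptE | move=> u ub; split].
  - exact: setI1u Ea ub.
  - exact: setI1u Ec ub.
  - exact: setI1u Ee ub.
have Himg : forall l b, AG_line l -> b \in BL l -> grp @: b = l.
  move=> l b Ll bl; have [a [c [e [[aG cG eG ->] _]]]] := Hdec l b Ll bl.
  have [El _ _ _ _] := Hm l Ll.
  move: aG cG eG; rewrite !inG => /eqP ga /eqP gc /eqP ge.
  by rewrite !imsetU !imset_set1 ga gc ge -El.
have Hnot : forall l b x, AG_line l -> b \in BL l -> b \in Bx x -> False.
  move=> l b x Ll bl bx; have [sb _] := Hgb x b bx.
  have I := Himg l b Ll bl; have [El xy _ _ _] := Hm l Ll.
  have hx : mx l \in grp @: b by rewrite I; case: (Hlm l Ll).
  have hy : my l \in grp @: b by rewrite I; case: (Hlm l Ll).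
  have gx : forall w, w \in grp @: b -> w = x.
    by move=> w /imsetP[q qb ->]; apply/eqP; rewrite -inG (subsetP sb q qb).
  by move/eqP: xy; apply; rewrite (gx _ hx) (gx _ hy).
have HgU : forall x x' b, b \in Bx x -> b \in Bx x' -> x = x'.
  move=> x x' b bx bx'; have [sb cb] := Hgb x b bx; have [sb' _] := Hgb x' b bx'.
  have [q qb] : exists q, q \in b by apply/card_gt0P; rewrite cb.
  have := subsetP sb q qb; have := subsetP sb' q qb; rewrite !inG.
  by move=> /eqP e1 /eqP e2; rewrite -e1 -e2.
have HlU : forall l l' b, AG_line l -> AG_line l' -> b \in BL l -> b \in BL l' -> l = l'.
  by move=> l l' b Ll Ll' bl bl'; rewrite -(Himg l b) // -(Himg l' b).
have keyG : forall x b, b \in Bx x -> key b = inl (index (pblock (Qf x) b) (enum (Qf x))).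
  move=> x b bx; rewrite /key; case: pickP => [x' bx' | /(_ x)]; last by rewrite bx.
  by rewrite (HgU x' x b bx' bx).
have keyL : forall l b, AG_line l -> b \in BL l -> key b =
    inr (dir l, index (mL l (pt b (G (mx l))) (pt b (G (my l)))) (enum (G (mz l)))).
  move=> l b Ll bl; rewrite /key; case: pickP => [x' bx' | _].
    by case: (Hnot l b x' Ll bl bx').
  case: pickP => [l' /andP[Ll' bl'] | /(_ l)]; last by rewrite Ll bl.
  by rewrite (HlU l' l b Ll' Ll bl' bl).
have HBin : forall b, b \in B -> (exists x, b \in Bx x) \/ (exists2 l, AG_line l & b \in BL l).
  move=> b; rewrite HB inE => /orP[/bigcupP[x _ bx] | /bigcupP[l Ll bl]].
    by left; exists x.
  by right; exists l.
have HinB1 : forall x b, b \in Bx x -> b \in B.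
  by move=> x b bx; rewrite HB inE; apply/orP; left; apply/bigcupP; exists x.
have HinB2 : forall l b, AG_line l -> b \in BL l -> b \in B.
  by move=> l b Ll bl; rewrite HB inE; apply/orP; right; apply/bigcupP; exists l.
have Hpair : forall l (i j : 'I_3) u v b b', AG_line l -> i != j ->
    u \in nth (G (mx l)) [:: G (mx l); G (my l); G (mz l)] i ->
    v \in nth (G (mx l)) [:: G (mx l); G (my l); G (mz l)] j ->
    b \in BL l -> b' \in BL l -> u \in b -> v \in b -> u \in b' -> v \in b' -> b = b'.
  move=> l i j u v b b' Ll ij uG vG bl b'l ub vb ub' vb'.
  have [_ [_ [_ Hp]]] := Htd l Ll.
  by apply: (card1_uniq (Hp i j u v ij uG vG)); rewrite inE ?bl ?b'l ?ub ?vb ?ub' ?vb'.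
have Hpex : forall l (i j : 'I_3) u v, AG_line l -> i != j ->
    u \in nth (G (mx l)) [:: G (mx l); G (my l); G (mz l)] i ->
    v \in nth (G (mx l)) [:: G (mx l); G (my l); G (mz l)] j ->
    exists2 b, b \in BL l & u \in b /\ v \in b.
  move=> l i j u v Ll ij uG vG; have [_ [_ [_ Hp]]] := Htd l Ll.
  have [b] := card1_ex (Hp i j u v ij uG vG); rewrite inE => /andP[bl /andP[ub vb]].
  by exists b.
have HQc : forall x, #|Qf x| * 2 = T - 1.
  move=> x; have [q qG] : exists q, q \in G x by apply/card_gt0P; rewrite HG expn_gt0.
  by rewrite (res_count (HBx x) (HQf x) qG) HG.
have Hex : forall b0 p, b0 \in B -> exists2 b, b \in B & (key b = key b0 /\ p \in b).
  move=> b0 p b0B; pose x0 := grp p.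
  have pG : p \in G x0 by rewrite inG.
  case: (HBin b0 b0B) => [[x1 bx1] | [l1 Ll1 bl1]].
  - rewrite (keyG x1 b0 bx1).
    have /andP[pQ1 _] := HQf x1.
    have cb0 : b0 \in cover (Qf x1) by rewrite (cover_partition pQ1).
    have jlt : index (pblock (Qf x1) b0) (enum (Qf x1)) < #|Qf x0|.
      have -> : #|Qf x0| = #|Qf x1|.
        by apply/eqP; rewrite -(eqn_pmul2r (isT : 0 < 2)) !HQc.
      by rewrite cardE index_mem mem_enum pblock_mem.
    move: (index _ _) jlt => j jlt.
    pose C := nth set0 (enum (Qf x0)) j.
    have CQ : C \in Qf x0 by rewrite -mem_enum mem_nth // -cardE.
    have /andP[pQ0 /forall_inP pcs] := HQf x0.
    have /andP[sC pC] := pcs C CQ.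
    have [b bC pb] := part_ex pC pG.
    have bx0 : b \in Bx x0 := subsetP sC b bC.
    exists b; first exact: HinB1 bx0.
    split => //; rewrite (keyG x0 b bx0); congr inl.
    have /and3P[_ tQ _] := pQ0.
    by rewrite (def_pblock tQ CQ bC) /C index_uniq ?enum_uniq // -cardE.
  have [i ilt ->] : exists2 i, i < T & key b0 = inr (dir l1, i).
    have [_ _ _ _ [Lin1 _ _ _]] := Hm l1 Ll1.
    have [a1 [c1 [e1 [[aG1 cG1 _ _] [pa1 pc1 _]]]]] := Hdec l1 b0 Ll1 bl1.
    exists (index (mL l1 a1 c1) (enum (G (mz l1)))).
      by rewrite -(HG (mz l1)) cardE index_mem mem_enum Lin1.
    by rewrite (keyL l1 b0 Ll1 bl1) pa1 pc1.
  pose l := [set (x0 + w)%R | w in dir l1].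
  have [Ll Edir] := line_shift x0 Ll1.
  have x0l : x0 \in l.
    apply/imsetP; exists 0%R; last by rewrite GRing.addr0.
    have [m1 _ _] := Hlm l1 Ll1.
    by apply/imset2P; exists (mx l1) (mx l1); rewrite ?GRing.subrr.
  have [El xy xz yz [Lin Lrow Lcol Lorth]] := Hm l Ll.
  pose s := nth p0 (enum (G (mz l))) i.
  have isz : i < size (enum (G (mz l))) by rewrite -cardE HG.
  have sG : s \in G (mz l) by rewrite -mem_enum mem_nth.
  have sidx : index s (enum (G (mz l))) = i by rewrite index_uniq ?enum_uniq.
  suff [b bl [Lb pb]] : exists2 b, b \in BL l &
      (mL l (pt b (G (mx l))) (pt b (G (my l))) = s /\ p \in b).
    exists b; first exact: HinB2 Ll bl.
    by split => //; rewrite (keyL l b Ll bl) Lb sidx Edir.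
  have ptm : forall b u, b \in BL l -> u \in b -> (u \in G (mx l) -> pt b (G (mx l)) = u) /\
                                           (u \in G (my l) -> pt b (G (my l)) = u).
    move=> b u bl ub; have [a [c [e [_ [pa pc Hu]]]]] := Hdec l b Ll bl.
    have [Hua Huc _] := Hu u ub.
    by split => h; [rewrite pa (Hua h) | rewrite pc (Huc h)].
  have : x0 \in [set mx l; my l; mz l] by rewrite -El.
  rewrite !inE => /orP[/orP[/eqP ex | /eqP ey] | /eqP ez].
  - have pGx : p \in G (mx l) by rewrite inG -ex.
    have [c cG Lc] := inj_surj (f := mL l p) (fun c c' cG c'G => Lrow p c c' pGx cG c'G)
       (fun c cG => Lin p c pGx cG) (etrans (HG _) (esym (HG _))) sG.
    have [b bl [pb cb]] := Hpex l (@Ordinal 3 0 isT) (@Ordinal 3 1 isT) p c Ll isT pGx cG.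
    exists b => //; split => //.
    by rewrite (proj1 (ptm b p bl pb) pGx) (proj2 (ptm b c bl cb) cG).
  - have pGy : p \in G (my l) by rewrite inG -ey.
    have [a aG La] := inj_surj (f := fun a => mL l a p)
       (fun a a' aG a'G => Lcol a a' p aG a'G pGy)
       (fun a aG => Lin a p aG pGy) (etrans (HG _) (esym (HG _))) sG.
    have [b bl [ab pb]] := Hpex l (@Ordinal 3 0 isT) (@Ordinal 3 1 isT) a p Ll isT aG pGy.
    exists b => //; split => //.
    by rewrite (proj1 (ptm b a bl ab) aG) (proj2 (ptm b p bl pb) pGy).
  have pGz : p \in G (mz l) by rewrite inG -ez.
  pose beta a := odflt set0 [pick b | (b \in BL l) && (a \in b) && (p \in b)].
  have Hbeta : forall a, a \in G (mx l) -> [/\ beta a \in BL l, a \in beta a & p \in beta a].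
    move=> a aG; have [b0' bl0 [ab0 pb0]] :=
      Hpex l (@Ordinal 3 0 isT) (@Ordinal 3 2 isT) a p Ll isT aG pGz.
    rewrite /beta; case: pickP => [b /andP[/andP[? ?] ?] | /(_ b0')] //=.
    by rewrite bl0 ab0 pb0.
  have Hbd : forall a, a \in G (mx l) -> exists c, [/\ c \in G (my l),
      beta a = [set a; c; p], pt (beta a) (G (mx l)) = a & pt (beta a) (G (my l)) = c].
    move=> a aG; have [bl ab pb] := Hbeta a aG.
    have [a' [c [e [[aG' cG eG Eb] [pa pc Hu]]]]] := Hdec l (beta a) Ll bl.
    have [Hua _ _] := Hu a ab; have [_ _ Hue] := Hu p pb.
    rewrite -(Hua aG) -(Hue pGz) in Eb pa.
    by exists c.
  pose f a := mL l a (pt (beta a) (G (my l))).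
  have finj : {in G (mx l) &, injective f}.
    move=> a a' aG a'G; rewrite /f.
    have [c [cG Eb _ pc]] := Hbd a aG; have [c' [c'G Eb' _ pc']] := Hbd a' a'G.
    have [bl _ _] := Hbeta a aG; have [bl' _ _] := Hbeta a' a'G.
    rewrite pc pc' => EL.
    rewrite Eb in bl; rewrite Eb' in bl'.
    by case: (Lorth _ _ _ _ _ aG a'G cG c'G bl bl' EL).
  have fin : forall a, a \in G (mx l) -> f a \in G (mz l).
    move=> a aG; rewrite /f; have [c [cG _ _ ->]] := Hbd a aG.
    exact: Lin.
  have [a aG La] := inj_surj finj fin (etrans (HG _) (esym (HG _))) sG.
  have [bl ab pb] := Hbeta a aG; exists (beta a) => //; split => //.
  have [c [_ _ pa _]] := Hbd a aG.
  by rewrite pa.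
have Huniq : forall b b' p, b \in B -> b' \in B -> key b = key b' -> p \in b -> p \in b' -> b = b'.
  move=> b b' p bB b'B kbb' pb pb'.
  case: (HBin b bB) => [[x bx] | [l Ll bl]]; case: (HBin b' b'B) => [[x' bx'] | [l' Ll' bl']].
  - rewrite (keyG x b bx) (keyG x' b' bx') in kbb'; case: kbb' => ki.
    have xx' : x = x'.
      have := subsetP (proj1 (Hgb x b bx)) p pb.
      have := subsetP (proj1 (Hgb x' b' bx')) p pb'.
      by rewrite !inG => /eqP e1 /eqP e2; rewrite -e1 -e2.
    subst x'.
    have /andP[pQ /forall_inP pcs] := HQf x.
    have cb : b \in cover (Qf x) by rewrite (cover_partition pQ).
    have cb' : b' \in cover (Qf x) by rewrite (cover_partition pQ).
    have Cb := pblock_mem cb; have Cb' := pblock_mem cb'.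
    have EC : pblock (Qf x) b = pblock (Qf x) b'.
      rewrite -(nth_index set0 (s := enum (Qf x)) (x := pblock (Qf x) b)) ?mem_enum //.
      by rewrite ki nth_index ?mem_enum.
    have /andP[_ /and3P[_ tC _]] := pcs _ Cb.
    apply: (triv_eq tC _ _ pb pb').
      by rewrite mem_pblock.
    by rewrite EC mem_pblock.
  - by rewrite (keyG x b bx) (keyL l' b' Ll' bl') in kbb'.
  - by rewrite (keyG x' b' bx') (keyL l b Ll bl) in kbb'.
  rewrite (keyL l b Ll bl) (keyL l' b' Ll' bl') in kbb'; case: kbb' => edir eidx.
  have gl : grp p \in l by rewrite -(Himg l b Ll bl); apply/imsetP; exists p.
  have gl' : grp p \in l' by rewrite -(Himg l' b' Ll' bl'); apply/imsetP; exists p.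
  have ll' : l = l' by rewrite (line_dir Ll gl) (line_dir Ll' gl') edir.
  subst l'.
  have [_ xy xz yz [Lin Lrow Lcol Lorth]] := Hm l Ll.
  have [a [c [e [[aG cG eG Eb] [pa pc Hu]]]]] := Hdec l b Ll bl.
  have [a' [c' [e' [[aG' cG' eG' Eb'] [pa' pc' Hu']]]]] := Hdec l b' Ll bl'.
  rewrite pa pc pa' pc' in eidx; clear pa pc pa' pc'.
  have [ab cb eb] : [/\ a \in b, c \in b & e \in b] by rewrite Eb !inE !eqxx ?orbT.
  have [ab' cb' eb'] : [/\ a' \in b', c' \in b' & e' \in b'] by rewrite Eb' !inE !eqxx ?orbT.
  have EL : mL l a c = mL l a' c'.
    rewrite -(nth_index p0 (s := enum (G (mz l))) (x := mL l a c)) ?mem_enum ?Lin //.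
    by rewrite eidx nth_index ?mem_enum ?Lin.
  have [Hua Huc Hue] := Hu p pb; have [Hua' Huc' Hue'] := Hu' p pb'.
  have pb3 : p \in [set a; c; e] by rewrite -Eb.
  move: pb3; rewrite !inE => /orP[/orP[/eqP pa0 | /eqP pc0] | /eqP pe0].
  - subst p; have aa' := Hua' aG; subst a'.
    have cc' := Lrow _ _ _ aG cG cG' EL; subst c'.
    by apply: (Hpair l (@Ordinal 3 0 isT) (@Ordinal 3 1 isT) a c b b').
  - subst p; have cc' := Huc' cG; subst c'.
    have aa' := Lcol _ _ _ aG aG' cG EL; subst a'.
    by apply: (Hpair l (@Ordinal 3 0 isT) (@Ordinal 3 1 isT) a c b b').
  - subst p; have ee' := Hue' eG; subst e'.
    have [aa' cc'] := Lorth _ _ _ _ _ aG aG' cG cG' (eq_ind _ (fun X => X \in BL l) bl _ Eb) (eq_ind _ (fun X => X \in BL l) bl' _ Eb') EL.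
    by rewrite Eb Eb' aa' cc'.
have HBc : forall b, b \in B -> #|b| = 3 by move=> b bB; case: (proj1 HS b bB).
have PC : forall C, C \in preim_partition key B -> parallel_class [set: P] B C.
  move=> C /imsetP[b0 b0B ->]; apply/andP; split.
    by apply/subsetP => b; rewrite inE => /andP[].
  apply: part_of_unique.
  - move=> b; rewrite inE => /andP[bB _]; split; last exact: subsetT.
    by rewrite -card_gt0 HBc.
  - move=> p _; have [b bB [kb pb]] := Hex b0 p b0B; exists b => //.
    by rewrite inE bB kb eqxx.
  - move=> p b b' pb pb'; rewrite !inE => /andP[bB /eqP kb] /andP[b'B /eqP kb'].
    by apply: (Huniq b b' p) => //; rewrite -kb -kb'.
have Hr : resolution [set: P] B (preim_partition key B).
  by apply/andP; split; [exact: preim_partitionP | apply/forall_inP].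
exists (preim_partition key B); split => //.
have := res_count HS Hr (in_setT p0); rewrite cardP => E.
by rewrite -E mulnK.
Qed.
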